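(* For each $n$ let $N_n=(N_{n,1},\ldots,N_{n,M_n})$ be multinomially distributed with parameters $(n,p_{n,1},\ldots,p_{n,M_n})$, where $\liminf_{n\to\infty}n\min_m p_{n,m}>0$. If $\alpha_{n,m}$ are real numbers with $\sum_m|\alpha_{n,m}|=O(1)$ and $\max_m|\alpha_{n,m}|\to0$ as $n\to\infty$, then $$\sum_m\alpha_{n,m}\Big(\frac{N_{n,m}(N_{n,m}-1)}{n(n-1)p_{n,m}^2}-1\Big)\to0\quad\text{in probability}.$$ *)

(* Defs.v *)
From HB Require Import structures.
From mathcomp Require Import all_boot all_order all_algebra.
From mathcomp Require Import all_classical all_reals all_analysis.
Set Implicit Arguments. Unset Strict Implicit. Unset Printing Implicit Defensive.
Import Order.TTheory GRing.Theory Num.Theory.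
Local Open Scope ring_scope.

(* A multinomial(n, p_1..p_M) vector is realised as the count vector of
   n independent draws with values in 'I_M, each drawn with law p.
   An outcome is x : {ffun 'I_n -> 'I_M}, of probability \prod_i p (x i). *)

Definition count_of (n M : nat) (x : {ffun 'I_n -> 'I_M}) (m : 'I_M) : nat :=
  #|[set i | x i == m]|.

Definition prob_draws {R : realType} (n M : nat) (p : 'I_M -> R)
  (E : pred {ffun 'I_n -> 'I_M}) : R :=
  \sum_(x : {ffun 'I_n -> 'I_M} | E x) \prod_(i < n) p (x i).

Definition stat {R : realType} (n M : nat) (p alpha : 'I_M -> R)
  (x : {ffun 'I_n -> 'I_M}) : R :=
  \sum_(m < M) alpha m *
    (((count_of x m)%:R * ((count_of x m)%:R - 1)) /
       (n%:R * (n%:R - 1) * (p m) ^+ 2) - 1).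

(* Main.v *)
Require Import Defs.
From HB Require Import structures.
From mathcomp Require Import all_boot all_order all_algebra.
From mathcomp Require Import all_classical all_reals all_analysis.
From mathcomp Require Import ring lra.
Import Order.TTheory GRing.Theory Num.Theory.
Local Open Scope ring_scope.

Set Implicit Arguments. Unset Strict Implicit. Unset Printing Implicit Defensive.


Definition EE {R : realType} (n M : nat) (p : 'I_M -> R)
  (f : {ffun 'I_n -> 'I_M} -> R) : R :=
  \sum_(x : {ffun 'I_n -> 'I_M}) (\prod_(i < n) p (x i)) * f x.

Definition Ep {R : realType} (M : nat) (p : 'I_M -> R) (g : 'I_M -> R) : R :=
  \sum_(y < M) p y * g y.

Lemma EE_prod {R : realType} n M (p : 'I_M -> R) (F : 'I_n -> 'I_M -> R) :
  EE p (fun x => \prod_(i < n) F i (x i)) = \prod_(i < n) Ep p (F i).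
Proof.
rewrite /EE /Ep bigA_distr_bigA; apply: eq_bigr => x _.
by rewrite -big_split.
Qed.

Lemma EE_lin {R : realType} n M (p : 'I_M -> R) (I : finType) (f : I -> {ffun 'I_n -> 'I_M} -> R) :
  EE p (fun x => \sum_(k : I) f k x) = \sum_(k : I) EE p (f k).
Proof.
rewrite /EE exchange_big /=; apply: eq_bigr => x _.
by rewrite mulr_sumr.
Qed.

Lemma EE_scale {R : realType} n M (p : 'I_M -> R) c f :
  EE p (fun x : {ffun 'I_n -> 'I_M} => c * f x) = c * EE p f.
Proof.
rewrite /EE mulr_sumr; apply: eq_bigr => x _; by rewrite mulrCA.
Qed.

Lemma prod_if1 {R : realType} n (i : 'I_n) (f : 'I_n -> R) :
  \prod_(t < n) (if t == i then f t else 1) = f i.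
Proof.
rewrite (bigD1 i) //= eqxx big1 ?mulr1 // => t /negbTE ->; done.
Qed.



Lemma Ep1 {R : realType} M (p : 'I_M -> R) : \sum_(m < M) p m = 1 ->
  Ep p (fun _ => 1) = 1.
Proof. by move=> h; rewrite /Ep; under eq_bigr do rewrite mulr1. Qed.

Lemma Ep_ext {R : realType} M (p : 'I_M -> R) f g : (forall y, f y = g y) ->
  Ep p f = Ep p g.
Proof. by move=> h; apply: eq_bigr => y _; rewrite h. Qed.

Lemma prod_Ep1 {R : realType} n M (p : 'I_M -> R) (F : 'I_n -> 'I_M -> R) (i : 'I_n) :
  \sum_(m < M) p m = 1 ->
  (forall t, t != i -> forall y, F t y = 1) ->
  \prod_(t < n) Ep p (F t) = Ep p (F i).
Proof.
move=> hs h; rewrite (bigD1 i) //= big1 ?mulr1 // => t ti.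
by rewrite (Ep_ext _ (h t ti)) Ep1.
Qed.

Lemma prod_Ep2 {R : realType} n M (p : 'I_M -> R) (F : 'I_n -> 'I_M -> R) (i j : 'I_n) :
  \sum_(m < M) p m = 1 -> i != j ->
  (forall t, t != i -> t != j -> forall y, F t y = 1) ->
  \prod_(t < n) Ep p (F t) = Ep p (F i) * Ep p (F j).
Proof.
move=> hs ij h; rewrite (bigD1 i) //= (bigD1 j) 1?eq_sym //= big1 ?mulr1 // => t /andP[ti tj].
by rewrite (Ep_ext _ (h t ti tj)) Ep1.
Qed.

Lemma prod_Ep0 {R : realType} n M (p : 'I_M -> R) (F : 'I_n -> 'I_M -> R) (i : 'I_n) :
  Ep p (F i) = 0 -> \prod_(t < n) Ep p (F t) = 0.
Proof. by move=> h; rewrite (bigD1 i) //= h mul0r. Qed.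

Definition ifc {R : realType} n M (i : 'I_n) (f : 'I_M -> R) (t : 'I_n) (y : 'I_M) : R :=
  if t == i then f y else 1.

Lemma prod_ifc {R : realType} n M (i : 'I_n) (f : 'I_M -> R) (x : {ffun 'I_n -> 'I_M}) :
  \prod_(t < n) ifc i f t (x t) = f (x i).
Proof. by rewrite /ifc (prod_if1 i (fun t => f (x t))). Qed.

Lemma E2 {R : realType} n M (p : 'I_M -> R) (i a : 'I_n) (f g : 'I_M -> R) :
  \sum_(m < M) p m = 1 ->
  EE p (fun x => f (x i) * g (x a)) =
  if i == a then Ep p (fun y => f y * g y) else Ep p f * Ep p g.
Proof.
move=> hs.
have -> : (fun x : {ffun 'I_n -> 'I_M} => f (x i) * g (x a)) =
  (fun x => \prod_(t < n) (fun t y => ifc i f t y * ifc a g t y) t (x t)).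
  by apply: funext => x; rewrite big_split /= !prod_ifc.
rewrite (EE_prod p (fun t y => ifc i f t y * ifc a g t y)); case: eqP => [<-|/eqP ia].
  rewrite (prod_Ep1 (i:=i) hs) /ifc; last by move=> t /negbTE -> y; rewrite mulr1.
  by apply: Ep_ext => y; rewrite eqxx.
rewrite (prod_Ep2 hs ia); last by move=> t /negbTE ti /negbTE ta y; rewrite /ifc ti ta mulr1.
rewrite /ifc; congr (_ * _); apply: Ep_ext => y; rewrite eqxx.
  by rewrite (negbTE ia) mulr1.
by rewrite eq_sym (negbTE ia) mul1r.
Qed.

Ltac neqs := repeat match goal with
  | H : is_true (?x != ?y) |- context[?x == ?y] => rewrite (negbTE H)
  | H : is_true (?x != ?y) |- context[?y == ?x] => rewrite (eq_sym y x) (negbTE H)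
  end; rewrite ?eqxx ?mul1r ?mulr1.

Lemma E4 {R : realType} n M (p : 'I_M -> R) (i j a b : 'I_n) (f1 f2 f3 f4 : 'I_M -> R) :
  \sum_(m < M) p m = 1 -> i != j -> a != b ->
  Ep p f1 = 0 -> Ep p f2 = 0 -> Ep p f3 = 0 -> Ep p f4 = 0 ->
  EE p (fun x => f1 (x i) * f2 (x j) * (f3 (x a) * f4 (x b))) =
  ((a == i) && (b == j))%:R * (Ep p (fun y => f1 y * f3 y) * Ep p (fun y => f2 y * f4 y)) +
  ((a == j) && (b == i))%:R * (Ep p (fun y => f1 y * f4 y) * Ep p (fun y => f2 y * f3 y)).
Proof.
move=> hs ij ab e1 e2 e3 e4.
pose F t y := ifc i f1 t y * ifc j f2 t y * (ifc a f3 t y * ifc b f4 t y).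
have -> : (fun x : {ffun 'I_n -> 'I_M} => f1 (x i) * f2 (x j) * (f3 (x a) * f4 (x b))) =
  (fun x => \prod_(t < n) F t (x t)).
  by apply: funext => x; rewrite !big_split /= !prod_ifc.
rewrite (EE_prod p F) /F /ifc.
have [ai|ai] := eqVneq a i; have [aj|aj] := eqVneq a j.
- by move: ij; rewrite -ai -aj eqxx.
- subst a; have [bj|bj] := eqVneq b j; last first.
    have bi : b != i by rewrite eq_sym.
    rewrite /= ?mul0r ?mul1r ?add0r ?addr0.
    rewrite (prod_Ep0 (i:=b)) ?mul0r //.
    rewrite -e4; apply: Ep_ext => y.
    by neqs.
  subst b; rewrite /= ?mul0r ?mul1r ?add0r ?addr0.
  rewrite (prod_Ep2 hs ij); last first.
    by move=> t /negbTE ti /negbTE tj y; rewrite ti tj !mulr1.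
  by congr (_ * _); apply: Ep_ext => y; neqs.
- subst a; have [bi|bi] := eqVneq b i; last first.
    have bj : b != j by rewrite eq_sym.
    rewrite /= ?andbF ?mul0r ?mul1r ?add0r ?addr0.
    rewrite (prod_Ep0 (i:=b)) ?mul0r //.
    rewrite -e4; apply: Ep_ext => y.
    by neqs.
  subst b; rewrite /= ?mul0r ?mul1r ?add0r ?addr0.
  rewrite (prod_Ep2 hs ij); last first.
    by move=> t /negbTE ti /negbTE tj y; rewrite ti tj !mulr1.
  by congr (_ * _); apply: Ep_ext => y; neqs.
- rewrite /= ?mul0r ?mul1r ?add0r ?addr0.
  rewrite (prod_Ep0 (i:=a)) //.
  rewrite -e3; apply: Ep_ext => y.
    by neqs.
Qed.

Unset Implicit Arguments.

Definition dd {R : realType} {M : nat} (p : 'I_M -> R) (m y : 'I_M) : R := (y == m)%:R - p m.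
Definition gam {R : realType} (n : nat) {M : nat} (p a : 'I_M -> R) (m : 'I_M) : R :=
  a m / (n%:R * (n%:R - 1) * p m ^+ 2).
Definition bet {R : realType} (n : nat) {M : nat} (p a : 'I_M -> R) (m : 'I_M) : R :=
  2 * a m / (n%:R * p m).
Definition uu {R : realType} (n : nat) {M : nat} (p a : 'I_M -> R) (y : 'I_M) : R :=
  \sum_(m < M) bet n p a m * dd p m y.
Definition hh {R : realType} (n : nat) {M : nat} (p a : 'I_M -> R) (y z : 'I_M) : R :=
  \sum_(m < M) gam n p a m * (dd p m y * dd p m z).
Definition AA {R : realType} {n M : nat} (p a : 'I_M -> R) (x : {ffun 'I_n -> 'I_M}) : R :=
  \sum_(i < n) uu n p a (x i).
Definition BB {R : realType} {n M : nat} (p a : 'I_M -> R) (x : {ffun 'I_n -> 'I_M}) : R :=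
  \sum_(i < n) \sum_(j < n) (i != j)%:R * hh n p a (x i) (x j).

Set Implicit Arguments. Unset Strict Implicit. Unset Printing Implicit Defensive.

Lemma count_ofE {R : realType} n M (x : {ffun 'I_n -> 'I_M}) m :
  (count_of x m)%:R = \sum_(i < n) ((x i == m)%:R : R).
Proof.
rewrite /count_of -sum1_card natr_sum big_mkcond /=; apply: eq_bigr => i _.
by rewrite inE; case: eqP.
Qed.

Lemma offdiag {R : realType} n (v : 'I_n -> R) :
  \sum_(i < n) \sum_(j < n) (i != j)%:R * (v i * v j) =
  (\sum_(i < n) v i) ^+ 2 - \sum_(i < n) v i ^+ 2.
Proof.
rewrite expr2 mulr_suml -sumrB; apply: eq_bigr => i _.
rewrite mulr_sumr (bigD1 i) //= eqxx mul0r add0r.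
rewrite [X in _ = X - _](bigD1 i) //= expr2 addrAC subrr add0r.
by apply: eq_bigr => j ji; rewrite eq_sym ji mul1r.
Qed.

Lemma decomp {R : realType} n M (p a : 'I_M -> R) (x : {ffun 'I_n -> 'I_M}) :
  (1 < n)%N -> (forall m, 0 < p m) ->
  stat p a x = AA p a x + BB p a x.
Proof.
move=> n2 pp.
rewrite /stat /AA /BB /uu /hh.
have eA : \sum_(i < n) \sum_(m < M) bet n p a m * dd p m (x i) =
    \sum_(m < M) bet n p a m * \sum_(i < n) dd p m (x i).
  by rewrite exchange_big; apply: eq_bigr => m _; rewrite mulr_sumr.
have eB : \sum_(i < n) \sum_(j < n) (i != j)%:R *
        \sum_(m < M) gam n p a m * (dd p m (x i) * dd p m (x j)) =
   \sum_(m < M) gam n p a m * \sum_(i < n) \sum_(j < n) (i != j)%:R *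
        (dd p m (x i) * dd p m (x j)).
  under eq_bigr do under eq_bigr do rewrite mulr_sumr.
  under eq_bigr do rewrite exchange_big /=.
  rewrite exchange_big /=; apply: eq_bigr => m _.
  rewrite mulr_sumr; apply: eq_bigr => i _; rewrite mulr_sumr; apply: eq_bigr => j _.
  by rewrite mulrCA.
rewrite eA eB -big_split /=; apply: eq_bigr => m _.
rewrite (offdiag (fun i => dd p m (x i))).
have hd2 : \sum_(i < n) dd p m (x i) ^+ 2 =
   (count_of x m)%:R * (1 - 2 * p m) + n%:R * p m ^+ 2.
  transitivity (\sum_(i < n) ((x i == m)%:R * (1 - 2 * p m) + p m ^+ 2)).
    by apply: eq_bigr => i _; rewrite /dd; case: (x i == m); rewrite /=; ring.
  by rewrite big_split /= -mulr_suml sumr_const card_ord count_ofE ; congr (_ + _); rewrite mulr_natl.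
have hd : \sum_(i < n) dd p m (x i) = (count_of x m)%:R - n%:R * p m.
  transitivity (\sum_(i < n) ((x i == m)%:R - p m)); first by [].
  by rewrite sumrB sumr_const card_ord count_ofE; congr (_ - _); rewrite mulr_natl.
rewrite hd hd2 /gam /bet.
have n0 : (n%:R : R) != 0 by rewrite pnatr_eq0 -lt0n ltnW.
have n1 : (n%:R - 1 : R) != 0.
  by rewrite subr_eq0 (eqr_nat R n 1) neq_ltn n2 orbT.
have p0 : p m != 0 by rewrite gt_eqF.
field.
by rewrite n0 n1 p0.
Qed.

Set Implicit Arguments. Unset Strict Implicit. Unset Printing Implicit Defensive.

Lemma sum_pick {R : realType} n (j : 'I_n) (F : 'I_n -> R) :
  \sum_(b < n) (b == j)%:R * F b = F j.
Proof.
rewrite (bigD1 j) //= eqxx mul1r big1 ?addr0 // => b /negbTE ->; by rewrite mul0r.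
Qed.

Lemma sum_pick' {R : realType} n (j : 'I_n) (F : 'I_n -> R) :
  \sum_(b < n) (j == b)%:R * F b = F j.
Proof. by under eq_bigr do rewrite eq_sym; apply: sum_pick. Qed.

Lemma cnt1 {R : realType} n (i : 'I_n) : \sum_(j < n) ((i != j)%:R : R) = n%:R - 1.
Proof.
transitivity (\sum_(j < n) (1 - (i == j)%:R * 1 : R)).
  by apply: eq_bigr => j _; case: (i == j); rewrite /= ?mulr1 ?subr0 ?subrr.
by rewrite sumrB sum_pick' sumr_const card_ord.
Qed.

Lemma cnt2 {R : realType} n (i j : 'I_n) : i != j ->
  \sum_(a < n) \sum_(b < n) (a != b)%:R *
     (((a == i) && (b == j))%:R + ((a == j) && (b == i))%:R) = 2 :> R.
Proof.
move=> ij.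
transitivity (\sum_(a < n) ((a == i)%:R * (a != j)%:R + (a == j)%:R * (a != i)%:R) : R).
  apply: eq_bigr => a _.
  transitivity (\sum_(b < n) ((b == j)%:R * ((a != b)%:R * (a == i)%:R) +
                               (b == i)%:R * ((a != b)%:R * (a == j)%:R)) : R).
    apply: eq_bigr => b _.
    by case: (a == i); case: (b == j); case: (a == j); case: (b == i); case: (a != b);
      rewrite /= ?mul0r ?mulr0 ?mul1r ?mulr1 ?addr0 ?add0r.
  by rewrite big_split /= !sum_pick mulrC [X in _ + X]mulrC.
rewrite big_split /= !sum_pick ij eq_sym ij.
by [].
Qed.

Lemma Ep_dd {R : realType} M (p : 'I_M -> R) m : \sum_(m < M) p m = 1 ->
  Ep p (dd p m) = 0.
Proof.
move=> hs; rewrite /Ep /dd.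
under eq_bigr do rewrite mulrBr.
by rewrite sumrB -mulr_suml hs mul1r (eq_bigr _ (fun y _ => mulrC _ _)) sum_pick subrr.
Qed.

Lemma Ep_ddd {R : realType} M (p : 'I_M -> R) m k : \sum_(m < M) p m = 1 ->
  Ep p (fun y => dd p m y * dd p k y) = (m == k)%:R * p m - p m * p k.
Proof.
move=> hs; rewrite /Ep /dd.
transitivity (\sum_(y < M) ((y == m)%:R * ((y == k)%:R * p y) - p k * ((y == m)%:R * p y)
   - p m * ((y == k)%:R * p y) + p m * p k * p y)).
  by apply: eq_bigr => y _; ring.
rewrite !big_split /= !sumrN -!mulr_sumr !sum_pick hs; ring.
Qed.

Lemma Ep_ddd' {R : realType} M (p : 'I_M -> R) m k : \sum_(m < M) p m = 1 ->
  Ep p (fun y => dd p m y * dd p k y) = (m == k)%:R * p m - p m * p k.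
Proof. exact: Ep_ddd. Qed.

Lemma Ep_lin {R : realType} M (p : 'I_M -> R) (f : 'I_M -> 'I_M -> R) c :
  Ep p (fun y => \sum_(m < M) c m * f m y) = \sum_(m < M) c m * Ep p (f m).
Proof.
rewrite /Ep; under eq_bigr do rewrite mulr_sumr.
rewrite exchange_big /=; apply: eq_bigr => m _; rewrite mulr_sumr.
by apply: eq_bigr => y _; rewrite mulrCA.
Qed.

Lemma Ep_uu {R : realType} n M (p a : 'I_M -> R) : \sum_(m < M) p m = 1 ->
  Ep p (uu n p a) = 0.
Proof.
move=> hs; rewrite /uu Ep_lin big1 // => m _; by rewrite Ep_dd ?mulr0.
Qed.

Lemma EA2 {R : realType} n M (p a : 'I_M -> R) : \sum_(m < M) p m = 1 ->
  EE p (fun x : {ffun 'I_n -> 'I_M} => AA p a x ^+ 2) =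
  n%:R * Ep p (fun y => uu n p a y ^+ 2).
Proof.
move=> hs.
transitivity (EE p (fun x : {ffun 'I_n -> 'I_M} =>
   \sum_(i < n) \sum_(j < n) uu n p a (x i) * uu n p a (x j))).
  rewrite /EE; apply: eq_bigr => x _; congr (_ * _).
  rewrite /AA expr2 mulr_suml; apply: eq_bigr => i _; by rewrite mulr_sumr.
rewrite EE_lin.
transitivity (\sum_(i < n) Ep p (fun y => uu n p a y ^+ 2)).
  apply: eq_bigr => i _; rewrite EE_lin (bigD1 i) //= E2 // eqxx.
  rewrite big1 ?addr0; first by apply: Ep_ext => y; rewrite expr2.
  by move=> j ij; rewrite E2 // eq_sym (negbTE ij) Ep_uu // mul0r.
by rewrite sumr_const card_ord mulr_natl.
Qed.

Definition QQ {R : realType} (n : nat) {M : nat} (p a : 'I_M -> R) : R :=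
  \sum_(m < M) \sum_(k < M) gam n p a m * gam n p a k *
     (Ep p (fun y => dd p m y * dd p k y)) ^+ 2.

Lemma Ehh {R : realType} n M (p a : 'I_M -> R) (i j a' b : 'I_n) :
  \sum_(m < M) p m = 1 -> i != j -> a' != b ->
  EE p (fun x : {ffun 'I_n -> 'I_M} => hh n p a (x i) (x j) * hh n p a (x a') (x b)) =
  (((a' == i) && (b == j))%:R + ((a' == j) && (b == i))%:R) * QQ n p a.
Proof.
move=> hs ij ab.
transitivity (EE p (fun x : {ffun 'I_n -> 'I_M} => \sum_(m < M) \sum_(k < M)
   (gam n p a m * gam n p a k) * (dd p m (x i) * dd p m (x j) * (dd p k (x a') * dd p k (x b))))).
  rewrite /EE; apply: eq_bigr => x _; congr (_ * _).
  rewrite /hh mulr_suml; apply: eq_bigr => m _; rewrite mulr_sumr; apply: eq_bigr => k _.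
  by rewrite mulrACA.
rewrite EE_lin /QQ mulr_sumr; apply: eq_bigr => m _.
rewrite EE_lin mulr_sumr; apply: eq_bigr => k _.
rewrite EE_scale E4 ?Ep_dd //.
ring.
Qed.

Lemma EB2 {R : realType} n M (p a : 'I_M -> R) : \sum_(m < M) p m = 1 ->
  EE p (fun x : {ffun 'I_n -> 'I_M} => BB p a x ^+ 2) =
  2 * n%:R * (n%:R - 1) * QQ n p a.
Proof.
move=> hs.
transitivity (EE p (fun x : {ffun 'I_n -> 'I_M} =>
   \sum_(i < n) \sum_(j < n) \sum_(a' < n) \sum_(b < n)
     ((i != j)%:R * (a' != b)%:R) * (hh n p a (x i) (x j) * hh n p a (x a') (x b)))).
  rewrite /EE; apply: eq_bigr => x _; congr (_ * _).
  rewrite /BB expr2 mulr_suml; apply: eq_bigr => i _.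
  rewrite mulr_suml; apply: eq_bigr => j _.
  rewrite mulr_sumr; apply: eq_bigr => a' _.
  rewrite mulr_sumr; apply: eq_bigr => b _.
  by rewrite mulrACA.
transitivity (\sum_(i < n) \sum_(j < n) (i != j)%:R * (2 * QQ n p a)).
  rewrite EE_lin; apply: eq_bigr => i _.
  rewrite EE_lin; apply: eq_bigr => j _.
  have [ij|ij] := eqVneq i j.
    rewrite mulr0n mul0r /EE; apply: big1 => x _.
    apply/eqP; rewrite mulf_eq0; apply/orP; right; apply/eqP.
    by apply: big1 => a' _; apply: big1 => b _; rewrite !mul0r.
  rewrite mulr1n mul1r -(cnt2 (R:=R) ij) mulr_suml EE_lin; apply: eq_bigr => a' _.
  rewrite EE_lin mulr_suml; apply: eq_bigr => b _.
  rewrite EE_scale mul1r.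
  have [ab|ab] := eqVneq a' b; first by rewrite mulr0n !mul0r.
  by rewrite Ehh // !mulr1n !mul1r.
under eq_bigr do rewrite -mulr_suml cnt1.
by rewrite sumr_const card_ord -mulr_natl; ring.
Qed.

Set Implicit Arguments. Unset Strict Implicit. Unset Printing Implicit Defensive.

Lemma EE_le {R : realType} n M (p : 'I_M -> R) (f g : {ffun 'I_n -> 'I_M} -> R) :
  (forall m, 0 <= p m) -> (forall x, f x <= g x) -> EE p f <= EE p g.
Proof.
move=> p0 fg; rewrite /EE; apply: ler_sum => x _; apply: ler_wpM2l => //.
by apply: prodr_ge0 => i _.
Qed.

Lemma EE_add {R : realType} n M (p : 'I_M -> R) (f g : {ffun 'I_n -> 'I_M} -> R) :
  EE p (fun x => f x + g x) = EE p f + EE p g.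
Proof. by rewrite /EE -big_split; apply: eq_bigr => x _; rewrite mulrDr. Qed.

Lemma uuE {R : realType} n M (p a : 'I_M -> R) y :
  uu n p a y = bet n p a y - \sum_(m < M) bet n p a m * p m.
Proof.
rewrite /uu /dd; under eq_bigr do rewrite mulrBr.
by rewrite sumrB (eq_bigr _ (fun m _ => mulrC _ _)) sum_pick'.
Qed.

Lemma Ep_uu2 {R : realType} n M (p a : 'I_M -> R) : \sum_(m < M) p m = 1 ->
  (forall m, 0 <= p m) ->
  Ep p (fun y => uu n p a y ^+ 2) <= \sum_(m < M) p m * bet n p a m ^+ 2.
Proof.
move=> hs p0; set mu := \sum_(m < M) bet n p a m * p m.
have -> : Ep p (fun y => uu n p a y ^+ 2) =
   \sum_(m < M) p m * bet n p a m ^+ 2 - mu ^+ 2.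
  rewrite /Ep; under eq_bigr do rewrite uuE -/mu.
  transitivity (\sum_(y < M) (p y * bet n p a y ^+ 2 - (2 * mu) * (bet n p a y * p y)
     + mu ^+ 2 * p y)).
    by apply: eq_bigr => y _; ring.
  rewrite !big_split /= sumrN -!mulr_sumr hs -/mu; ring.
by rewrite lerBlDr lerDl sqr_ge0.
Qed.

Lemma QQ_le {R : realType} n M (p a : 'I_M -> R) : \sum_(m < M) p m = 1 ->
  (forall m, 0 <= p m) ->
  QQ n p a <= 2 * \sum_(m < M) gam n p a m ^+ 2 * p m ^+ 2 +
              2 * (\sum_(m < M) `|gam n p a m| * p m ^+ 2) ^+ 2.
Proof.
move=> hs p0; rewrite /QQ.
set g := gam n p a.
apply: le_trans (_ : \sum_(m < M) \sum_(k < M)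
   (2 * ((m == k)%:R * (`|g m| ^+ 2 * p m ^+ 2)) +
    2 * ((`|g m| * p m ^+ 2) * (`|g k| * p k ^+ 2)))  <= _).
  apply: ler_sum => m _; apply: ler_sum => k _.
  rewrite Ep_ddd //.
  have h1 : g m * g k <= `|g m| * `|g k| by rewrite -normrM ler_norm.
  apply: le_trans (_ : `|g m| * `|g k| * ((m == k)%:R * p m - p m * p k) ^+ 2 <= _).
    by apply: ler_wpM2r => //; apply: sqr_ge0.
  have gm := normr_ge0 (g m); have gk := normr_ge0 (g k).
  have pm := p0 m; have pk := p0 k.
  case: eqP => [<-|_]; rewrite /= ?mulr1n ?mulr0n ?mul1r ?mul0r.
    have -> : 2 * (`|g m| ^+ 2 * p m ^+ 2) + 2 * (`|g m| * p m ^+ 2 * (`|g m| * p m ^+ 2)) =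
      `|g m| * `|g m| * (2 * p m ^+ 2 + 2 * (p m * p m) ^+ 2) by ring.
    apply: ler_wpM2l; first by rewrite mulr_ge0.
    have := sqr_ge0 (p m + p m * p m); nra.
  have -> : 2 * 0 + 2 * (`|g m| * p m ^+ 2 * (`|g k| * p k ^+ 2)) =
      `|g m| * `|g k| * (2 * (p m * p k) ^+ 2) by ring.
  apply: ler_wpM2l; first by rewrite mulr_ge0.
  nra.
rewrite le_eqVlt; apply/orP; left; apply/eqP.
under eq_bigr do rewrite big_split /= -!mulr_sumr sum_pick'.
rewrite big_split /= -!mulr_sumr; congr (_ + _).
  by congr (_ * _); apply: eq_bigr => m _; rewrite real_normK // num_real.
rewrite expr2 mulr_suml; congr (_ * _); apply: eq_bigr => m _; by rewrite mulr_sumr.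
Qed.

Lemma term1 {R : realType} (N p a c : R) : 0 < c -> c <= N * p ->
  N * p * (2 * a / (N * p)) ^+ 2 <= 4 * a ^+ 2 / c.
Proof.
move=> c0 cP; have P0 : 0 < N * p by apply: lt_le_trans cP.
have -> : N * p * (2 * a / (N * p)) ^+ 2 = 4 * a ^+ 2 / (N * p).
  have : N * p != 0 by rewrite gt_eqF.
  by rewrite mulf_eq0 negb_or andbC => h; field.
apply: ler_wpM2l; first by rewrite mulr_ge0 // sqr_ge0.
by rewrite lef_pV2 ?posrE.
Qed.

Lemma term2 {R : realType} (N p a c : R) : 0 < c -> c <= N * p -> 2 <= N ->
  2 * N * (N - 1) * (2 * ((a / (N * (N - 1) * p ^+ 2)) ^+ 2 * p ^+ 2)) <= 8 / c ^+ 2 * a ^+ 2.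
Proof.
move=> c0 cP N2; have P0 : 0 < N * p by apply: lt_le_trans cP.
have N0 : 0 < N by apply: lt_le_trans N2; lra.
have N1 : 0 < N - 1 by lra.
have p0 : 0 < p by rewrite -(pmulr_rgt0 _ N0).
have -> : 2 * N * (N - 1) * (2 * ((a / (N * (N - 1) * p ^+ 2)) ^+ 2 * p ^+ 2)) =
   4 * N / ((N - 1) * (N * p) ^+ 2) * a ^+ 2.
  by field; rewrite !gt_eqF.
apply: ler_wpM2r; first by rewrite sqr_ge0.
have D0 : 0 < (N - 1) * (N * p) ^+ 2 by rewrite mulr_gt0 // exprn_gt0.
rewrite ler_pdivrMr // mulrAC ler_pdivlMr ?exprn_gt0 //.
have h1 : c ^+ 2 <= (N * p) ^+ 2 by rewrite ler_pXn2r // ?nnegrE ltW.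
have h2 : 0 <= c ^+ 2 by rewrite sqr_ge0.
nra.
Qed.

Lemma term3 {R : realType} (N p a : R) : 0 < p -> 2 <= N ->
  `|a / (N * (N - 1) * p ^+ 2)| * p ^+ 2 = `|a| / (N * (N - 1)).
Proof.
move=> p0 N2; have N0 : 0 < N by apply: lt_le_trans N2; lra.
have N1 : 0 < N - 1 by lra.
rewrite normrM normfV (ger0_norm (x := _ * _)); last first.
  by rewrite ltW // !mulr_gt0 // exprn_gt0.
by field; rewrite !gt_eqF ?exprn_gt0.
Qed.

Lemma ES2 {R : realType} n M (p a : 'I_M -> R) (c : R) :
  (1 < n)%N -> \sum_(m < M) p m = 1 -> 0 < c -> (forall m, c <= n%:R * p m) ->
  EE p (fun x : {ffun 'I_n -> 'I_M} => stat p a x ^+ 2) <=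
  (8 / c + 16 / c ^+ 2) * \sum_(m < M) a m ^+ 2 +
  8 * (\sum_(m < M) `|a m|) ^+ 2 / (n%:R * (n%:R - 1)).
Proof.
move=> n2 hs c0 cp.
have N2 : (2 : R) <= n%:R by rewrite (ler_nat R 2 n).
have N0 : (0 : R) < n%:R by apply: lt_le_trans N2; lra.
have pp : forall m, 0 < p m.
  by move=> m; rewrite -(pmulr_rgt0 _ N0); apply: lt_le_trans (cp m).
have p0 : forall m, 0 <= p m by move=> m; apply: ltW.
apply: le_trans (_ : 2 * EE p (fun x : {ffun 'I_n -> 'I_M} => AA p a x ^+ 2) +
                     2 * EE p (fun x : {ffun 'I_n -> 'I_M} => BB p a x ^+ 2) <= _).
  rewrite -!EE_scale -EE_add; apply: EE_le => // x.
  rewrite decomp //; have := sqr_ge0 (AA p a x - BB p a x); nra.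
rewrite EA2 // EB2 //.
have hA : n%:R * Ep p (fun y => uu n p a y ^+ 2) <= 4 / c * \sum_(m < M) a m ^+ 2.
  apply: le_trans (_ : n%:R * \sum_(m < M) p m * bet n p a m ^+ 2 <= _).
    by apply: ler_wpM2l; [apply: ltW | apply: Ep_uu2].
  rewrite mulr_sumr mulr_sumr; apply: ler_sum => m _.
  rewrite mulrA /bet; apply: le_trans (term1 _ c0 (cp m)) _.
  by rewrite mulrAC.
have hQ := QQ_le n a hs p0.
have hB : 2 * n%:R * (n%:R - 1) * QQ n p a <=
    8 / c ^+ 2 * \sum_(m < M) a m ^+ 2 +
    4 * (\sum_(m < M) `|a m|) ^+ 2 / (n%:R * (n%:R - 1)).
  have K0 : 0 <= 2 * n%:R * (n%:R - 1) :> R by rewrite !mulr_ge0 //; lra.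
  apply: le_trans (ler_wpM2l K0 hQ) _.
  rewrite mulrDr; apply: lerD.
    rewrite mulr_sumr mulr_sumr. rewrite [X in _ <= X]mulr_sumr; apply: ler_sum => m _.
    exact: term2 c0 (cp m) N2.
  under eq_bigr do rewrite /gam term3 //.
  rewrite -mulr_suml.
  have N1 : (0 : R) < n%:R - 1 by lra.
  rewrite le_eqVlt; apply/orP; left; apply/eqP; field.
  by rewrite !gt_eqF.
have -> : 8 / c + 16 / c ^+ 2 = 2 * (4 / c) + 2 * (8 / c ^+ 2) by ring.
lra.
Qed.

Unset Implicit Arguments.
Import numFieldNormedType.Exports.
Local Open Scope classical_set_scope.

Lemma cheb {R : realType} n M (p : 'I_M -> R) (f : {ffun 'I_n -> 'I_M} -> R) (eps : R) :
  (forall m, 0 <= p m) -> 0 < eps ->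
  prob_draws p (fun x => eps < `|f x|) <= EE p (fun x => f x ^+ 2) / eps ^+ 2.
Proof.
move=> p0 e0; rewrite /prob_draws /EE mulr_suml.
rewrite [X in _ <= X](bigID (fun x => eps < `|f x|)) /=.
rewrite -[X in X <= _]addr0; apply: lerD.
  apply: ler_sum => x hx.
  have w0 : 0 <= \prod_(i0 < n) p (x i0) by apply: prodr_ge0.
  rewrite -mulrA; apply: ler_peMr => //.
  rewrite ler_pdivlMr ?exprn_gt0 // mul1r -(real_normK (num_real (f x))).
  by rewrite ler_pXn2r ?nnegrE ?ltW // (lt_trans e0 hx).
apply: sumr_ge0 => x _.
by rewrite mulr_ge0 ?invr_ge0 ?sqr_ge0 // mulr_ge0 ?sqr_ge0 // prodr_ge0.
Qed.

Lemma prob_ge0 {R : realType} n M (p : 'I_M -> R) (E : pred {ffun 'I_n -> 'I_M}) :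
  (forall m, 0 <= p m) -> 0 <= prob_draws p E.
Proof. by move=> p0; apply: sumr_ge0 => x _; apply: prodr_ge0. Qed.

Lemma num_bound {R : realType} (N S C K Q mx : R) :
  2 <= N -> 0 <= S -> S <= C -> 0 <= K -> Q <= C * mx ->
  K * Q + 8 * S ^+ 2 / (N * (N - 1)) <= K * C * mx + 16 * C ^+ 2 * (N + 1)^-1.
Proof.
move=> N2 S0 SC K0 QC; apply: lerD; first by rewrite -mulrA; apply: ler_wpM2l.
have D0 : 0 < N * (N - 1) by apply: mulr_gt0; lra.
have N1 : 0 < N + 1 by lra.
rewrite ler_pdivrMr // mulrAC ler_pdivlMr //.
have h1 : S ^+ 2 <= C ^+ 2 by rewrite ler_pXn2r ?nnegrE //; lra.
have h2 : N + 1 <= 2 * (N * (N - 1)) by nra.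
have h3 : 0 <= S ^+ 2 by apply: sqr_ge0.
nra.
Qed.

Theorem corollary3 (R : realType) (M : nat -> nat)
  (p : forall n : nat, 'I_(M n) -> R) (alpha : forall n : nat, 'I_(M n) -> R)
  (p_ge0 : forall n m, 0 <= p n m)
  (p_sum1 : forall n, \sum_(m < M n) p n m = 1)
  (* liminf_n n * min_m p_{n,m} > 0 *)
  (p_liminf : exists2 c : R, 0 < c &
     exists N : nat, forall n : nat, (N <= n)%N -> forall m : 'I_(M n), c <= n%:R * p n m)
  (* sum_m |alpha_{n,m}| = O(1) *)
  (alpha_O1 : exists C : R, exists N : nat, forall n : nat, (N <= n)%N ->
     \sum_(m < M n) `|alpha n m| <= C)
  (* max_m |alpha_{n,m}| -> 0 *)
  (alpha_max : (fun n : nat => \big[Num.max/0]_(m < M n) `|alpha n m|) @ \oo --> 0%R) :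
  (* convergence in probability to 0 *)
  forall eps : R, 0 < eps ->
    (fun n : nat => prob_draws (p n) (fun x : {ffun 'I_n -> 'I_(M n)} =>
        eps < `|stat (p n) (alpha n) x|)) @ \oo --> 0%R.
Proof.
move=> eps e0.
case: p_liminf => c c0 [N1 hN1].
case: alpha_O1 => C [N2 hN2].
set mx := fun n => \big[Num.max/0]_(m < M n) `|alpha n m|.
set K := 8 / c + 16 / c ^+ 2.
have K0 : 0 <= K by rewrite /K addr_ge0 // divr_ge0 // ?exprn_ge0 // ltW.
set g := fun n : nat => (K * C * mx n + 16 * C ^+ 2 * harmonic n) * eps ^-2.
apply: (squeeze_cvgr (f := fun _ => 0) (h := g)).
- exists (maxn (maxn N1 N2) 2) => // n /= hn.
  have n1 : (N1 <= n)%N by apply: leq_trans hn; rewrite leq_max leq_maxl.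
  have n2 : (N2 <= n)%N by apply: leq_trans hn; rewrite leq_max leq_maxr.
  have nn : (1 < n)%N by apply: leq_trans hn; rewrite leq_maxr.
  apply/andP; split; first exact: prob_ge0.
  apply: le_trans (@cheb R n (M n) (p n) _ eps (p_ge0 n) e0) _.
  rewrite /g ler_pM2r ?invr_gt0 ?exprn_gt0 //.
  apply: le_trans (ES2 (alpha n) nn (p_sum1 n) c0 (hN1 n n1)) _.
  have S0 : 0 <= \sum_(m < M n) `|alpha n m| by apply: sumr_ge0 => m _.
  have mx0 : 0 <= mx n by apply: bigmax_ge_id.
  have := @num_bound R n%:R _ C K (\sum_(m < M n) alpha n m ^+ 2) (mx n) _ S0 (hN2 n n2) K0.
  move=> hb; apply: le_trans (hb _ _) _.
  - by rewrite (ler_nat R 2 n).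
  - apply: le_trans (_ : _ <= \sum_(m < M n) `|alpha n m| * mx n) _; last first.
      by rewrite -mulr_suml; apply: ler_wpM2r => //; apply: hN2.
    apply: ler_sum => m _; rewrite -real_normK ?num_real // expr2 ler_wpM2l //.
    by apply/bigmax_geP; right; exists m.
  - by rewrite /harmonic /= natr1.
- exact: cvg_cst.
- have H := cvgM (cvgD (cvgM (cvg_cst (K * C)) alpha_max)
     (cvgM (cvg_cst (16 * C ^+ 2)) cvg_harmonic)) (cvg_cst (eps ^-2)).
  rewrite !mulr0 addr0 mul0r in H.
  exact: H.
Qed.
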